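(* For every $n>1$ there are finite symmetric $\mathcal L_n$-structures $\mathcal X=\langle X;X_1,\dots,X_n\rangle$ and $\mathcal Y=\langle Y;Y_1,\dots,Y_n\rangle$ such that $\mathcal X$ and $\mathcal Y$ are not isomorphic, but their reducts $\langle X;X_1,\dots,X_{n-1}\rangle$ and $\langle Y;Y_1,\dots,Y_{n-1}\rangle$ to $\mathcal L_{n-1}$ are isomorphic.
   Context: For $n\in\mathbb N$, $\mathcal L_n$ is the first-order language $\{P_1,\dots,P_n\}$ of $n$ unary predicates ($\mathcal L_0$ is the language of pure equality). An $\mathcal L_n$-structure $\mathcal F=\langle F;F_1,\dots,F_n\rangle$ has $F_i$ the interpretation of $P_i$. For $n>1$, $\mathcal F$ is symmetric if for every permutation $\sigma\in\mathfrak S_n$ the structure $\mathcal F$ is isomorphic to $\langle F;F_{\sigma(1)},\dots,F_{\sigma(n)}\rangle$, i.e. there is a bijection $\tilde\sigma:F\to F$ with $\gamma\in F_i$ iff $\tilde\sigma(\gamma)\in F_{\sigma(i)}$. *)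

(* Defs.v *)
From mathcomp Require Import all_boot all_fingroup.
Set Implicit Arguments. Unset Strict Implicit. Unset Printing Implicit Defensive.

(* A finite L_n-structure <F; F_1,...,F_n> is a finType F together with
   A : 'I_n -> {set F} (A i interprets the predicate P_(i+1)). *)

Definition iso_struct (X Y : finType) (n : nat)
  (A : 'I_n -> {set X}) (B : 'I_n -> {set Y}) : Prop :=
  exists f : X -> Y, bijective f /\ forall (i : 'I_n) (x : X), (x \in A i) = (f x \in B i).

Definition symmetric_struct (X : finType) (n : nat) (A : 'I_n -> {set X}) : Prop :=
  forall s : 'S_n, iso_struct A (fun i => A (s i)).

Definition reduct (X : finType) (n : nat) (A : 'I_n -> {set X}) : 'I_n.-1 -> {set X} :=
  fun j => A (widen_ord (leq_pred n) j).

(* Main.v *)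
Require Import Defs.
From mathcomp Require Import all_boot all_fingroup.

Section Aux.
Variable n : nat.

Definition XX (b : bool) : finType := {S : {set 'I_n} | odd #|S| == b}.
Definition AA (b : bool) (i : 'I_n) : {set XX b} := [set S : XX b | i \in val S].

Lemma sym_AA b : symmetric_struct (AA b).
Proof.
move=> s.
have mk : forall (t : 'S_n) (S : XX b), odd #|[set t x | x in val S]| == b.
  by move=> t S; rewrite card_imset ?(valP S) //; apply: perm_inj.
pose f (t : 'S_n) (S : XX b) : XX b := @exist {set 'I_n} (fun S => odd #|S| == b) _ (mk t S).
exists (f s); split.
  exists (f (s^-1)%g) => S; apply: val_inj => /=; rewrite -imset_comp;
    by rewrite (@eq_imset _ _ _ id) ?imset_id // => x /=; rewrite ?permKV ?permK.
move=> i S; rewrite !inE /= mem_imset //; apply: perm_inj.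
Qed.

Lemma noiso : ~ iso_struct (AA false) (AA true).
Proof.
case=> f [_ H].
have S0 : odd #|(set0 : {set 'I_n})| == false by rewrite cards0.
pose S : XX false := @exist {set 'I_n} (fun S => odd #|S| == false) _ S0.
have E : val (f S) = set0.
  apply/setP => i; move: (H i S); rewrite !inE /= => <-; by [].
by move: (valP (f S)); rewrite E cards0.
Qed.

Hypothesis hn : 0 < n.
Definition a : 'I_n := @Ordinal n n.-1 ltac:(by rewrite ltn_predL).


Definition tog (S : {set 'I_n}) := if a \in S then S :\ a else a |: S.

Lemma togK : involutive tog.
Proof.
move=> S; rewrite /tog; case: (boolP (a \in S)) => Ha.
  by rewrite setD11 setD1K.
by rewrite setU11 setU1K.
Qed.

Lemma tog_odd S : odd #|tog S| = ~~ odd #|S|.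
Proof.
rewrite /tog; case: ifP => Ha.
  by rewrite [in RHS](cardsD1 a) Ha /= negbK.
by rewrite cardsU1 Ha.
Qed.

Lemma tog_mem S (j : 'I_n.-1) :
  (widen_ord (leq_pred n) j \in tog S) = (widen_ord (leq_pred n) j \in S).
Proof.
have ne : widen_ord (leq_pred n) j != a.
  by apply/eqP => /(congr1 val) /= E; move: (ltn_ord j); rewrite E ltnn.
by rewrite /tog; case: ifP => _; rewrite !inE (negbTE ne).
Qed.

Lemma red_iso b : iso_struct (reduct (AA b)) (reduct (AA (~~ b))).
Proof.
have mk : forall c (S : XX c), odd #|tog (val S)| == ~~ c.
  by move=> c S; rewrite tog_odd (eqP (valP S)).
pose g c (S : XX c) : XX (~~ c) := @exist {set 'I_n} (fun S => odd #|S| == ~~ c) _ (mk c S).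
have mk2 : forall (S : XX (~~ b)), odd #|tog (val S)| == b.
  by move=> S; rewrite tog_odd (eqP (valP S)) negbK.
pose h (S : XX (~~ b)) : XX b := @exist {set 'I_n} (fun S => odd #|S| == b) _ (mk2 S).
exists (g b); split.
  by exists h => S; apply: val_inj => /=; rewrite togK.
by move=> j S; rewrite /reduct !inE /= tog_mem.
Qed.

End Aux.

Theorem lemma5p6 (n : nat) (hn : 1 < n) :
  exists (X Y : finType) (A : 'I_n -> {set X}) (B : 'I_n -> {set Y}),
    [/\ symmetric_struct A, symmetric_struct B,
        ~ iso_struct A B & iso_struct (reduct A) (reduct B)].
Proof.
have hn0 : 0 < n by apply: ltnW.
exists (XX n false), (XX n true), (AA n false), (AA n true).
split; [exact: sym_AA | exact: sym_AA | exact: noiso | exact: (@red_iso n hn0 false)].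
Qed.
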